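(* Let $\mathbf{F}=(f_{ij})$ be an $n\times n$ nonnegative matrix, $\vec z=(z_1,\dots,z_n)^{\mathrm T}$ a nonnegative column vector and $\vec y=(y_1,\dots,y_n)$ a nonnegative row vector. Define $T^{\mathrm{in}}_i=\sum_{j} f_{ij}+z_i$ and $T^{\mathrm{out}}_j=\sum_{i} f_{ij}+y_j$, assume all are positive, and assume steady state: $T^{\mathrm{in}}_\ell=T^{\mathrm{out}}_\ell$ for all $\ell$. Let $\mathbf G=(g_{ij})$ with $g_{ij}=f_{ij}/T^{\mathrm{out}}_j$ and $\mathbf G'=(g'_{ij})$ with $g'_{ij}=f_{ij}/T^{\mathrm{in}}_i$. Then for each integer $m\ge0$, $$\sum_{i=1}^n(\mathbf G^m\vec z)_i=\sum_{i=1}^n(\vec y\mathbf G'^m)_i.$$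
   Context: $f_{ij}$ is the flow from node $j$ to node $i$, $z_i$ the boundary input to node $i$, $y_j$ the boundary output from node $j$. $\mathbf G^0=\mathbf G'^0$ is the identity matrix. *)

(* Defs.v *)
From mathcomp Require Import all_boot all_order all_algebra.
Set Implicit Arguments. Unset Strict Implicit. Unset Printing Implicit Defensive.
Import Order.TTheory GRing.Theory Num.Theory.
Local Open Scope ring_scope.

Definition mxpow (R : pzRingType) (n : nat) (G : 'M[R]_n) (m : nat) : 'M[R]_n :=
  iter m (fun A => G *m A) 1%:M.

Definition Tin (R : pzRingType) (n : nat) (F : 'M[R]_n) (z : 'cV[R]_n) (i : 'I_n) : R :=
  \sum_(j < n) F i j + z i 0.
Definition Tout (R : pzRingType) (n : nat) (F : 'M[R]_n) (y : 'rV[R]_n) (j : 'I_n) : R :=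
  \sum_(i < n) F i j + y 0 j.

(* Main.v *)
Require Import Defs.
From mathcomp Require Import all_boot all_order all_algebra.
Import Order.TTheory GRing.Theory Num.Theory.
Local Open Scope ring_scope.

Lemma mxpowSr (R : pzRingType) n (G : 'M[R]_n) m :
  mxpow G m.+1 = mxpow G m *m G.
Proof.
elim: m => [|m IH]; first by rewrite /mxpow /= mulmx1 mul1mx.
have e k : mxpow G k.+1 = G *m mxpow G k by [].
by rewrite {1}e {1}IH mulmxA.
Qed.

Theorem lemma2 (R : realFieldType) (n : nat) (F : 'M[R]_n) (z : 'cV[R]_n) (y : 'rV[R]_n)
  (hF : forall i j, 0 <= F i j) (hz : forall i, 0 <= z i 0) (hy : forall j, 0 <= y 0 j)
  (hin : forall i, 0 < Tin F z i) (hout : forall j, 0 < Tout F y j)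
  (hss : forall l, Tin F z l = Tout F y l) (m : nat) :
  let G := \matrix_(i, j) (F i j / Tout F y j) in
  let G' := \matrix_(i, j) (F i j / Tin F z i) in
  \sum_(i < n) (mxpow G m *m z) i 0 = \sum_(i < n) (y *m mxpow G' m) 0 i.
Proof.
move=> G G'.
set Tr : 'rV[R]_n := \row_j Tout F y j.
set Tc : 'cV[R]_n := \col_j Tout F y j.
set Dm : 'M[R]_n := diag_mx Tr.
set one : 'rV[R]_n := const_mx 1.
set onec : 'cV[R]_n := const_mx 1.
have Tnz j : Tout F y j != 0 by rewrite gt_eqF.
have GD : G *m Dm = F.
  apply/matrixP => i j; rewrite mul_mx_diag !mxE divfK //.
have DG : Dm *m G' = F.
  apply/matrixP => i j; rewrite mul_diag_mx !mxE hss mulrC divfK //.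
have GT : G *m Tc = Tc - z.
  apply/matrixP => i k; rewrite (ord1 k) !mxE -hss /Tin addrK.
  by apply: eq_bigr => j _; rewrite !mxE divfK.
have TG : Tr *m G' = Tr - y.
  apply/matrixP => k j; rewrite (ord1 k) !mxE /Tout addrK.
  by apply: eq_bigr => i _; rewrite !mxE hss mulrC divfK.
have comm k : mxpow G k *m Dm = Dm *m mxpow G' k.
  elim: k => [|k IH]; first by rewrite /mxpow /= mulmx1 mul1mx.
  have e (H : 'M[R]_n) l : mxpow H l.+1 = H *m mxpow H l by [].
  by rewrite !e -[LHS]mulmxA IH [LHS]mulmxA GD [RHS]mulmxA DG.
have DTc : Dm *m onec = Tc.
  by apply/matrixP => i k; rewrite mul_diag_mx !mxE mulr1.
have oneD : one *m Dm = Tr.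
  by apply/matrixP => k j; rewrite mul_mx_diag !mxE mul1r.
have ab k : one *m mxpow G k *m Tc = Tr *m mxpow G' k *m onec.
  by rewrite -DTc !mulmxA -(mulmxA one) comm mulmxA oneD.
have L : \sum_(i < n) (mxpow G m *m z) i 0 = (one *m (mxpow G m *m z)) 0 0.
  by rewrite !mxE; apply: eq_bigr => i _; rewrite !mxE mul1r.
have Rr : \sum_(i < n) (y *m mxpow G' m) 0 i = ((y *m mxpow G' m) *m onec) 0 0.
  by rewrite [RHS]mxE; apply: eq_bigr => i _; rewrite [onec _ _]mxE mulr1.
rewrite L Rr.
have zE : z = Tc - G *m Tc by rewrite GT opprB addrC subrK.
have yE : y = Tr - Tr *m G' by rewrite TG opprB addrC subrK.
rewrite zE yE mulmxBr mulmxBl mulmxA -mxpowSr.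
have eS2 : Tr *m G' *m mxpow G' m = Tr *m mxpow G' m.+1 by rewrite -mulmxA.
congr (_ 0 0).
rewrite mulmxBr mulmxBl.
rewrite (mulmxA one (mxpow G m)) (mulmxA one (mxpow G m.+1)) (ab m) (ab m.+1).
by rewrite -eS2.
Qed.
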